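(* Let $p,q$ be positive integers and $\mathbf{C}=\begin{bmatrix}1 & p\\ q & 1+pq\end{bmatrix}$. For each positive integer $e$ let $T_e$ be the least period of the Cat map over $\mathbb{Z}_{2^e}$. Then there exists a positive integer $e_s$ such that $T_{e+l}=2^l\cdot T_e$ for every integer $e\ge e_s$ and every non-negative integer $l$.
   Context: For a positive integer $N$, the Cat map over $\mathbb{Z}_N$ is the map $\mathbb{Z}_N^2\to\mathbb{Z}_N^2$, $v\mapsto \mathbf{C}v \bmod N$. Its least period is the least positive integer $n$ such that $\mathbf{C}^n v\equiv v \pmod N$ for all $v\in\mathbb{Z}_N^2$. *)

(* Defs.v *)
From mathcomp Require Import all_boot all_order all_algebra.
Set Implicit Arguments. Unset Strict Implicit. Unset Printing Implicit Defensive.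
Import GRing.Theory Num.Theory.
Local Open Scope ring_scope.

Definition cat_mx (p q : nat) : 'M[int]_2 :=
  \matrix_(i < 2, j < 2)
    (if (i == 0%N :> nat) then (if (j == 0%N :> nat) then 1 else p%:Z)
     else (if (j == 0%N :> nat) then q%:Z else 1 + p%:Z * q%:Z)).

Definition cat_fixes (p q N n : nat) : Prop :=
  forall v : 'cV[int]_2, forall i : 'I_2,
    (((cat_mx p q ^+ n) *m v) i ord0 = v i ord0 %[mod N%:Z])%Z.

Definition cat_least_period (p q N n : nat) : Prop :=
  (0 < n)%N /\ cat_fixes p q N n /\
  forall m : nat, (0 < m)%N -> cat_fixes p q N m -> (n <= m)%N.

(* Main.v *)
Require Import Defs.
From mathcomp Require Import all_boot all_order all_algebra ring lra zify.
Set Implicit Arguments. Unset Strict Implicit. Unset Printing Implicit Defensive.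
Import GRing.Theory Num.Theory.
Local Open Scope ring_scope.

Definition cong1 (d : int) (A : 'M[int]_2) := exists B : 'M[int]_2, A = 1 + d *: B.

Lemma cong1_mul d A A' : cong1 d A -> cong1 d A' -> cong1 d (A * A').
Proof.
move=> [B ->] [B' ->]; exists (B + B' + d *: (B * B')).
rewrite mulrDl !mul1r mulrDr mulr1 -scalerAl -scalerAr scalerA !scalerDr scalerA.
by rewrite !addrA; congr (_ + _); rewrite -!addrA; congr (_ + _); exact: addrC.
Qed.

Lemma cong1_exp d A u : cong1 d A -> cong1 d (A ^+ u).
Proof.
move=> h; elim: u => [|u IH]; first by exists 0; rewrite expr0 scaler0 addr0.
by rewrite exprS; apply: cong1_mul.
Qed.

Lemma cong1_dvd d d' A : (d %| d')%Z -> cong1 d' A -> cong1 d A.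
Proof.
move=> /dvdzP [c ->] [B ->]; exists (c *: B).
by rewrite scalerA mulrC.
Qed.

Lemma cong1_cancel d A Y : cong1 d A -> cong1 d (A * Y) -> cong1 d Y.
Proof.
move=> [X ->] [Z hZ]; exists (Z - X * Y).
move: hZ; rewrite mulrDl mul1r -scalerAl => /(congr1 (fun M => M - d *: (X * Y))).
by rewrite addrK scalerBr addrA.
Qed.

Definition cb (d : int) (A : 'M[int]_2) : bool :=
  [forall i, forall j, (d %| (A - 1) i j)%Z].

Lemma cbP d A : reflect (cong1 d A) (cb d A).
Proof.
apply: (iffP idP).
- move=> /forallP h.
  exists (\matrix_(i, j) (((A - 1) i j) %/ d)%Z).
  apply/matrixP => i j; rewrite !mxE.
  have := h i => /forallP /(_ j) /divzK.
  rewrite !mxE mulrC => ->. by rewrite addrC subrK.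
- move=> [B ->]; apply/forallP => i; apply/forallP => j.
  rewrite [1 + _]addrC addrK mxE. by apply: dvdz_mulr.
Qed.

Lemma cat_fixesP p q N n : cat_fixes p q N n <-> cong1 N%:Z (cat_mx p q ^+ n).
Proof.
split.
- move=> h; apply/cbP; apply/forallP => i; apply/forallP => j.
  have := h (delta_mx j 0) i.
  rewrite -colE !mxE => /eqP; rewrite eqz_mod_dvd.
  by rewrite andbT.
- move=> [B hB] v i.
  rewrite hB mulmxDl mul1mx -scalemxAl !mxE. 
  by rewrite addrC mulrC modzMDl.
Qed.
Definition codd (k : nat) (A : 'M[int]_2) :=
  exists B : 'M[int]_2, A = 1 + (2 ^+ k : int) *: B /\ exists i j, ~~ (2 %| B i j)%Z.

Lemma codd_cong k A : codd k A -> cong1 (2 ^+ k) A.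
Proof. by move=> [B [-> _]]; exists B. Qed.

Lemma codd_not k A : codd k A -> ~ cong1 (2 ^+ k.+1) A.
Proof.
move=> [B [-> [i [j hij]]]] [Y hY].
have : (2 ^+ k : int) *: B = (2 ^+ k : int) *: (2 *: Y).
  by move/(congr1 (fun M => M - 1)): hY; rewrite ![1 + _]addrC !addrK scalerA exprSr.
move/matrixP => /(_ i j); rewrite !mxE.
have hx : (2 ^+ k : int) != 0 by rewrite expf_neq0.
move/(mulfI hx) => e; move: hij; rewrite e.
by rewrite dvdz_mulr.
Qed.

Lemma sq_expand (x : int) (B : 'M[int]_2) :
  (1 + x *: B) ^+ 2 = 1 + (x + x) *: B + (x * x) *: (B * B).
Proof.
rewrite expr2 mulrDl mul1r mulrDr mulr1 -scalerAl -scalerAr scalerA scalerDl.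
by rewrite !addrA.
Qed.

Lemma codd_sq k A : (2 <= k)%N -> codd k A -> codd k.+1 (A ^+ 2).
Proof.
move=> hk [B [-> [i [j hij]]]].
exists (B + (2 ^+ k.-1 : int) *: (B * B)); split.
  rewrite sq_expand scalerDr scalerA addrA; congr (_ + _ *: _ + _ *: _).
    by rewrite exprS mulr_natl mulr2n.
  by rewrite -exprD addnn -addnn -exprD; case: k hk => [|k] //= _; rewrite addSn addnS.
exists i, j; rewrite !mxE; apply: contra hij.
have h2 : (2 %| (2 ^+ k.-1 : int))%Z.
  by case: k hk => [|[|k]] //= _; rewrite exprS dvdz_mulr.
by rewrite (rpredDr _ (dvdz_mulr _ h2)).
Qed.
Lemma codd_odd k A u : (2 <= k)%N -> codd k A -> odd u -> ~ cong1 (2 ^+ k.+1) (A ^+ u).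
Proof.
move=> hk hA hu hAu; have [B2 [hB2 _]] := codd_sq hk hA.
have h2 : cong1 (2 ^+ k.+1) (A ^+ 2) by exists B2.
apply: (codd_not hA); apply: (cong1_cancel (cong1_exp u./2 h2)).
rewrite -exprM -exprSr.
have -> : (2 * u./2).+1 = u by rewrite -{2}(odd_double_half u) hu mul2n add1n.
exact: hAu.
Qed.

Lemma mul2 (A B : 'M[int]_2) i j : (A * B) i j = A i 0 * B 0 j + A i 1 * B 1 j.
Proof. rewrite -mulmxE mxE !big_ord_recl big_ord0 addr0. 
have e : lift ord0 ord0 = 1 :> 'I_2 by apply/val_inj.
by rewrite e.
Qed.

Lemma cong1_sq2 A : cong1 2 A -> cong1 4 (A ^+ 2).
Proof.
move=> [X ->]; exists (X + X * X); rewrite sq_expand scalerDr [in RHS]addrA.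
by congr (_ + _ + _); congr (_ *: _).
Qed.

Lemma CH p q : cat_mx p q ^+ 2 = (2 + p%:Z * q%:Z) *: cat_mx p q - 1.
Proof.
apply/matrixP => i j; rewrite expr2 mul2 !mxE.
case: i => [[|[|i]] hi]; case: j => [[|[|j]] hj] //=; ring.
Qed.

Lemma C_cong2 p q : cong1 2 (cat_mx p q ^+ 6).
Proof.
have ech := CH p q.
move: ech; set C := cat_mx p q; set t := (2 + p%:Z * q%:Z) => ech.
set m := (p * q)%N; set h := m./2.
have hm : p%:Z * q%:Z = (odd m)%:Z + 2 * h%:Z.
  by rewrite -PoszM -/m -{1}(odd_double_half m) PoszD -muln2 PoszM mulrC.
case ho: (odd m) hm => hm0.
- have hm : p%:Z * q%:Z = 1 + 2 * h%:Z by rewrite hm0.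
  have e3 : C ^+ 3 = (t * t - 1) *: C - t *: 1.
    rewrite exprS ech mulrBr mulr1 -scalerAr -expr2 ech scalerBr scalerA.
    apply/matrixP => i j; rewrite !mxE; ring.
  have c3 : cong1 2 (C ^+ 3).
    exists ((2 * h%:Z * h%:Z + 6 * h%:Z + 4) *: C - (h%:Z + 2) *: 1).
    rewrite e3 /t hm; apply/matrixP => i j; rewrite !mxE; ring.
  by rewrite (_ : 6 = 3 * 2)%N // exprM; apply: cong1_exp.
- have hm : p%:Z * q%:Z = 2 * h%:Z by rewrite hm0 add0r.
  have c2 : cong1 2 (C ^+ 2).
    exists ((h%:Z + 1) *: C - 1).
    rewrite ech /t hm; apply/matrixP => i j; rewrite !mxE; ring.
  by rewrite (_ : 6 = 2 * 3)%N // exprM; apply: cong1_exp.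
Qed.

Lemma C_cong4 p q : cong1 4 (cat_mx p q ^+ 12).
Proof. by rewrite (_ : 12 = 6 * 2)%N // exprM; apply: cong1_sq2; apply: C_cong2. Qed.

Lemma pow2Z n : ((2 ^ n)%N : int) = 2 ^+ n.
Proof. by elim: n => [|n IH] //; rewrite expnS PoszM IH exprS. Qed.

Lemma dec2 n : (0 < n)%N -> exists i u, odd u /\ n = (2 ^ i * u)%N.
Proof.
elim: n {-2}n (leqnn n) => [|N IH] n hn hp; first by lia.
case ho: (odd n); first by exists 0%N, n; rewrite expn0 mul1n.
have e : n = (n./2).*2 by rewrite -{1}(odd_double_half n) ho.
have e' := e; rewrite -muln2 in e'.
have h1 : (n./2 <= N)%N by lia.
have h2 : (0 < n./2)%N by lia.
have [i [u [hu e2]]] := IH _ h1 h2.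
by exists i.+1, u; split => //; rewrite e' e2 expnS; lia.
Qed.

Lemma Centries p q :
  [/\ cat_mx p q 0 0 = 1, cat_mx p q 0 1 = p%:Z, cat_mx p q 1 0 = q%:Z &
      cat_mx p q 1 1 = 1 + p%:Z * q%:Z].
Proof. by rewrite !mxE. Qed.

Lemma Cpos p q n : (0 < p)%N -> (0 < q)%N ->
  [/\ forall i j, 0 <= (cat_mx p q ^+ n) i j,
      forall i, 1 <= (cat_mx p q ^+ n) i i &
      (0 < n)%N -> 1 <= (cat_mx p q ^+ n) 0 1].
Proof.
move=> hp hq; have [c00 c01 c10 c11] := Centries p q.
have hp' : 1 <= p%:Z by rewrite lez_nat.
have hq' : 1 <= q%:Z by rewrite lez_nat.
have cnn : forall i j, 0 <= cat_mx p q i j.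
  by move=> i j; rewrite !mxE; case: ifP => _; case: ifP => _; nia.
elim: n => [|n [h1 h2 h3]].
  split=> [i j|i|//]; rewrite expr0 mxE; [by case: (i == j) | by rewrite eqxx].
have e0 : forall i j, (cat_mx p q ^+ n.+1) i j =
   (cat_mx p q ^+ n) i 0 * cat_mx p q 0 j + (cat_mx p q ^+ n) i 1 * cat_mx p q 1 j.
  by move=> i j; rewrite exprSr mul2.
split.
- by move=> i j; rewrite e0 addr_ge0 // mulr_ge0.
- move=> i; rewrite e0.
  have : i = 0 \/ i = 1 by case: i => [[|[|i]] hi]; [left; exact: val_inj | right; exact: val_inj | by []].
  case=> ->.
  + rewrite c00 c10 mulr1; have := h2 0; have := h1 0 1; nia.
  + rewrite c01 c11; have := h2 1; have := h1 1 0; nia.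
- move=> _; rewrite e0 c01 c11; have := h2 0; have := h1 0 1; nia.
Qed.

Local Close Scope ring_scope.

Theorem theorem2 (p q : nat) (hp : (0 < p)%N) (hq : (0 < q)%N) :
  exists es : nat, (0 < es)%N /\
    forall e l : nat, (es <= e)%N ->
      exists T : nat,
        cat_least_period p q (2 ^ e) T /\
        cat_least_period p q (2 ^ (e + l)) (2 ^ l * T).
Proof.
Local Open Scope ring_scope.
set C := cat_mx p q.
have ex12 : exists n, (0 < n)%N && cb 4 (C ^+ n).
  by exists 12%N; apply/andP; split => //; apply/cbP; apply: C_cong4.
case: (ex_minnP ex12) => T /andP [T0 /cbP cT] Tmin.
have Tmin' : forall n, (0 < n)%N -> cong1 4 (C ^+ n) -> (T <= n)%N.
  by move=> n n0 /cbP cn; apply: Tmin; rewrite n0 cn.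
set M := C ^+ T - 1.
have M01 : M 0 1 != 0.
  have [_ _ h] := Cpos T hp hq.
  rewrite /M !mxE /= subr0.
  have := h T0; rewrite -/C => h'; apply/negP => /eqP e; rewrite e in h'; lia.
pose P k := [forall i, forall j, (2 ^+ k %| M i j)%Z].
have exP : exists k, P k.
  exists 2%N; apply/forallP => i; apply/forallP => j.
  by move/cbP: cT => /forallP /(_ i) /forallP /(_ j).
have ubP : forall k, P k -> (k <= `|(M 0 1)%R|)%N.
  move=> k /forallP /(_ (0 : 'I_2)) /forallP /(_ (1 : 'I_2)); rewrite dvdzE abszX => hd.
  apply: ltnW; apply: (leq_trans (ltn_expl k (isT : (1 < 2)%N))).
  by apply: dvdn_leq => //; rewrite absz_gt0.
case: (ex_maxnP exP ubP) => k Pk kmax.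
have k2 : (2 <= k)%N by apply: kmax; case: exP => k' _;
  apply/forallP => i; apply/forallP => j;
  by move/cbP: cT => /forallP /(_ i) /forallP /(_ j).
have cdk : codd k (C ^+ T).
  pose B := \matrix_(i, j) ((M i j) %/ 2 ^+ k)%Z.
  exists B; split.
    apply/matrixP => i j; rewrite !mxE.
    move/forallP: Pk => /(_ i) /forallP /(_ j) /divzK.
    rewrite /M !mxE mulrC => ->. by rewrite addrC subrK.
  case: (boolP [forall i, forall j, (2 %| B i j)%Z]) => hB; last first.
    move/forallPn: hB => [i /forallPn [j hj]]; by exists i, j.
  suff : P k.+1 by move/kmax; rewrite ltnn.
  apply/forallP => i; apply/forallP => j.
  move/forallP: hB => /(_ i) /forallP /(_ j).
  move/forallP: Pk => /(_ i) /forallP /(_ j) /divzK.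
  rewrite /B mxE => e h2.
  rewrite -e exprS.
  exact: dvdz_mul h2 (dvdzz _).
have cdj : forall j, codd (k + j) (C ^+ (2 ^ j * T)).
  elim=> [|j IH]; first by rewrite addn0 expn0 mul1n.
  rewrite addnS expnS -mulnA mulnC exprM.
  by apply: codd_sq => //; apply: leq_trans (leq_addr _ _).
have LP : forall j, cat_least_period p q (2 ^ (k + j)) (2 ^ j * T).
  move=> j; split; first by rewrite muln_gt0 expn_gt0 T0.
  split.
    by apply/cat_fixesP; rewrite pow2Z; apply: codd_cong.
  move=> m m0 /cat_fixesP; rewrite pow2Z -/C => cm.
  have c4 : cong1 4 (C ^+ m).
    apply: cong1_dvd cm; rewrite (_ : 4 = 2 ^+ 2) //.
    by apply: dvdz_exp2l; apply: leq_trans (leq_addr _ _).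
  have mr : (m %% T = 0)%N.
    apply/eqP; rewrite eqn0Ngt; apply/negP => r0.
    have : (T <= m %% T)%N.
      apply: Tmin' => //; apply: (cong1_cancel (cong1_exp (m %/ T) cT)).
      by rewrite -exprM -exprD mulnC -divn_eq.
    by rewrite leqNgt ltn_pmod.
  have em : m = (m %/ T * T)%N by rewrite {1}(divn_eq m T) mr addn0.
  have q0 : (0 < m %/ T)%N by rewrite em muln_gt0 in m0; case/andP: m0.
  have [i [u [hu eq]]] := dec2 q0.
  case: (ltnP i j) => hij.
    exfalso; apply: (codd_odd _ (cdj i) hu).
      by apply: leq_trans (leq_addr _ _).
    rewrite -exprM (_ : (2 ^ i * T * u = m)%N); last by rewrite em eq mulnAC.
    apply: cong1_dvd cm; apply: dvdz_exp2l; by rewrite -addnS leq_add2l.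
  rewrite em eq; apply: leq_mul => //.
  rewrite -[X in (X <= _)%N]muln1; apply: leq_mul; first by rewrite leq_pexp2l.
  by case: u hu {eq}.
exists k; split; first exact: ltnW k2.
move=> e l hek; exists (2 ^ (e - k) * T)%N; split.
  by have := LP (e - k)%N; rewrite subnKC.
have := LP (e - k + l)%N.
by rewrite addnA subnKC // mulnA -expnD [(l + _)%N]addnC.
Qed.
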